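(* Let $R$ be a commutative ring with unit and $f\in R$ a non-nilpotent element. Then the map $\mathrm{res}\colon\mathrm{prim}(R[f^{-1}])\to\mathrm{prim}(R)$, $I\mapsto I\cap R$, induces a homeomorphism onto its image, which is compact in $\mathrm{prim}(R)$. Moreover, for any finite family of non-nilpotent elements $f_1,\dots,f_m\in R$ generating the unit ideal, the sets $\mathrm{res}(\mathrm{prim}(R[f_i^{-1}]))$, $i=1,\dots,m$, form a finite compact cover of $\mathrm{prim}(R)$.
   Context: $\mathrm{Id}(R)$ denotes the set of proper ideals of $R$, endowed with the constructible topology (induced by the product topology on $\{0,1\}^R$ via characteristic functions); it is compact. $\mathrm{prim}(R)$ is the closure in $\mathrm{Id}(R)$ of the set of primary ideals of $R$. $I\cap R$ means the preimage of $I$ under the canonical map $R\to R[f^{-1}]$. *)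

(* Defs.v *)
From HB Require Import structures.
From mathcomp Require Import all_boot all_order all_algebra.
From mathcomp Require Import ring_quotient.
From mathcomp Require Import all_classical all_reals all_analysis.



Unset Printing Implicit Defensive.

Import Order.TTheory GRing.Theory Num.Theory.
Local Open Scope classical_set_scope.
Local Open Scope ring_scope.

(* Subsets of a ring R are encoded by their characteristic functions
   R -> bool, i.e. points of {0,1}^R.  The type {ptws R -> bool} carries the
   product topology (bool being discrete), so the induced topology on the set
   of ideals is the constructible topology of the paper. *)

Definition nilpotent_elt (R : comNzRingType) (x : R) : Prop :=
  exists n : nat, x ^+ n = 0.

(* Id(R): the proper ideals of R (mathcomp's idealr_closed includes 1 \notin I) *)
Definition Id_set (R : comNzRingType) : set {ptws R -> bool} :=
  [set I | @idealr_closed R (I : {pred R})].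

Definition primary_ideal (R : comNzRingType) (I : {pred R}) : Prop :=
  @idealr_closed R I /\
  forall a b : R, a * b \in I -> a \notin I -> exists n : nat, b ^+ n \in I.

Definition primary_set (R : comNzRingType) : set {ptws R -> bool} :=
  [set I | primary_ideal R (I : {pred R})].

Definition prim (R : comNzRingType) : set {ptws R -> bool} :=
  topology_structure.closure (primary_set R) `&` Id_set R.

(* phi : R -> S exhibits S as the localization R[f^{-1}]
   (standard characterization of the localization up to unique isomorphism):
   phi f is a unit, every element of S is phi r / phi f^n, and
   ker phi = { r | f^n r = 0 for some n }. *)
Definition is_localization (R S : comNzRingType) (f : R)
    (phi : {rmorphism R -> S}) : Prop :=
  [/\ exists u : S, phi f * u = 1,
      forall s : S, exists (r : R) (n : nat), s * phi f ^+ n = phi r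
    & forall r : R, phi r = 0 -> exists n : nat, f ^+ n * r = 0].

(* res : I |-> I \cap R, the preimage of I under R -> R[f^{-1}] *)
Definition res (R S : comNzRingType) (phi : {rmorphism R -> S})
    (I : {ptws S -> bool}) : {ptws R -> bool} :=
  fun r : R => I (phi r).

Arguments nilpotent_elt {R} x.
Arguments is_localization {R S} f phi.
Arguments res {R S} phi I.

(* Main.v *)
Require Import Defs.
From HB Require Import structures.
From mathcomp Require Import all_boot all_order all_algebra.
From mathcomp Require Import ring_quotient.
From mathcomp Require Import all_classical all_reals all_analysis.
Import Order.TTheory GRing.Theory Num.Theory.
Local Open Scope classical_set_scope.
Local Open Scope ring_scope.
Set Implicit Arguments. Unset Strict Implicit.

Lemma memQ (R : Type) (Q : R -> bool) x : (x \in (Q : {pred R})) = Q x.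
Proof. by []. Qed.

Definition idl (R : comNzRingType) (Q : R -> bool) :=
  [/\ Q 0, ~~ Q 1 & forall a u v, Q u -> Q v -> Q (a * u + v)].

Lemma idlE (R : comNzRingType) (Q : R -> bool) :
  idealr_closed (Q : {pred R}) <-> idl Q.
Proof.
by split=> [[h0 h1 h2]|[h0 h1 h2]]; split=> // a u v; apply: h2.
Qed.

Definition prm (R : comNzRingType) (Q : R -> bool) :=
  idl Q /\ forall a b, Q (a * b) -> ~~ Q a -> exists n, Q (b ^+ n).

Lemma prmE (R : comNzRingType) (Q : R -> bool) :
  primary_ideal R (Q : {pred R}) <-> prm Q.
Proof.
rewrite /primary_ideal /prm idlE; split=> -[h1 h2]; split=> //.
Qed.

Lemma idl_mul (R : comNzRingType) (Q : R -> bool) a u : idl Q -> Q u -> Q (a * u).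
Proof. by case=> h0 _ h2 hu; rewrite -[a * u]addr0; apply: h2. Qed.

Lemma idl_add (R : comNzRingType) (Q : R -> bool) u v : idl Q -> Q u -> Q v -> Q (u + v).
Proof. by case=> _ _ h2 hu hv; rewrite -[u]mul1r; apply: h2. Qed.

Lemma idl_mulr (R : comNzRingType) (Q : R -> bool) a u : idl Q -> Q u -> Q (u * a).
Proof. by move=> hQ hu; rewrite mulrC; apply: idl_mul. Qed.

Lemma idl_exp (R : comNzRingType) (Q : R -> bool) x n m : idl Q -> Q (x ^+ n) -> (n <= m)%N -> Q (x ^+ m).
Proof. by move=> hQ hx /subnK <-; rewrite exprD; apply: idl_mul. Qed.

Lemma rad_add (R : comNzRingType) (Q : R -> bool) x y : idl Q ->
  (exists n, Q (x ^+ n)) -> (exists n, Q (y ^+ n)) -> exists n, Q ((x + y) ^+ n).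
Proof.
move=> hQ [n hn] [m hm]; exists (n + m)%N; rewrite exprDn.
apply: (big_ind (fun z => Q z)); first by case: hQ.
  by move=> ? ?; apply: idl_add.
move=> i _; rewrite -mulr_natl; apply: idl_mul => //.
case: (leqP m i) => hi.
  by apply: idl_mul => //; apply: (idl_exp hQ hm).
apply: idl_mulr => //; apply: (idl_exp hQ hn).
have him : (i <= n + m)%N by apply: leq_trans (ltnW hi) (leq_addl n m).
by rewrite leq_subRL // addnC leq_add2l ltnW.
Qed.

Lemma rad_sum (R : comNzRingType) (Q : R -> bool) (m : nat) (fs a : 'I_m -> R) :
  idl Q -> \sum_(i < m) a i * fs i = 1 -> exists i, forall n, ~~ Q (fs i ^+ n).
Proof.
move=> hQ hs.
case: (pselect (exists i, forall n, ~~ Q (fs i ^+ n))) => // hN.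
have hr : forall i, exists n, Q (fs i ^+ n).
  move=> i; apply: contrapT => hi; apply: hN; exists i => n.
  by apply/negP => hq; apply: hi; exists n.
have : exists n, Q ((\sum_(i < m) a i * fs i) ^+ n).
  apply: (big_ind (fun z => exists n, Q (z ^+ n))).
  - by exists 1%N; rewrite expr1; case: hQ.
  - by move=> x y; apply: rad_add.
  move=> i _; have [n hn] := hr i; exists n; rewrite exprMn; exact: idl_mul.
rewrite hs => -[n]; rewrite expr1n; by case: hQ => _ /negP.
Qed.

Lemma res_idl (R S : comNzRingType) (phi : {rmorphism R -> S}) (Q : S -> bool) :
  idl Q -> idl (fun r => Q (phi r)).
Proof.
case=> h0 h1 h2; split; first by rewrite rmorph0.
  by rewrite rmorph1.
by move=> a u v hu hv; rewrite rmorphD rmorphM; apply: h2.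
Qed.

Lemma res_prm (R S : comNzRingType) (phi : {rmorphism R -> S}) (Q : S -> bool) :
  prm Q -> prm (fun r => Q (phi r)).
Proof.
case=> hi hp; split; first exact: res_idl.
move=> a b; rewrite rmorphM => hab ha; have [n hn] := hp _ _ hab ha.
by exists n; rewrite rmorphXn.
Qed.

Section Loc.
Variables (R S : comNzRingType) (f : R) (phi : {rmorphism R -> S}).
Hypothesis hloc : is_localization f phi.

Lemma loc_ker x n r : phi x * phi f ^+ n = phi r ->
  exists k, f ^+ (k + n) * x = f ^+ k * r.
Proof.
case: hloc => _ _ hk e.
have [k hk0] : exists k, f ^+ k * (x * f ^+ n - r) = 0.
  by apply: hk; rewrite rmorphB rmorphM rmorphXn e subrr.
exists k; apply/eqP; rewrite -subr_eq0 -hk0 mulrBr exprD.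
by rewrite -mulrA [x * _]mulrC.
Qed.

Variable (Q : R -> bool).
Hypothesis hQ : prm Q.
Hypothesis hf : forall n, ~~ Q (f ^+ n).

Lemma Qcancel k r : Q (f ^+ k * r) -> Q r.
Proof.
move=> h; case: (boolP (Q r)) => // hr.
case: hQ => _ hp; rewrite mulrC in h; have [N hN] := hp _ _ h hr.
by move: hN; rewrite -exprM (negbTE (hf _)).
Qed.

Definition P' (s : S) := exists r n, Q r /\ s * phi f ^+ n = phi r.
Definition Q' (s : S) : bool := `[< P' s >].

Lemma Q'P s : Q' s <-> P' s.
Proof. by rewrite /Q'; split => /asboolP. Qed.

Lemma Q'res r : Q' (phi r) = Q r.
Proof.
apply/idP/idP => [/Q'P [r' [n [hr e]]]|hr]; last first.
  by apply/Q'P; exists r, 0%N; rewrite expr0 mulr1.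
have [k hk] := loc_ker e.
by apply: (Qcancel (k := (k + n)%N)); rewrite hk; case: hQ => hi _; apply: idl_mul.
Qed.

Lemma Q'prm : prm Q'.
Proof.
case: (hQ) => hi hp; case: (hi) => h0 h1 h2.
case: hloc => [[u hu] hs hk].
split; first split.
- by apply/Q'P; exists 0, 0%N; rewrite mul0r rmorph0.
- by rewrite -(rmorph1 phi) Q'res.
- move=> a x y /Q'P [r1 [n1 [q1 e1]]] /Q'P [r2 [n2 [q2 e2]]].
  have [t [p ep]] := hs a.
  apply/Q'P; exists (t * r1 * f ^+ n2 + r2 * f ^+ (p + n1)), (p + n1 + n2)%N.
  split; first by apply: idl_add => //; apply: idl_mulr => //; apply: idl_mul.
  rewrite rmorphD !rmorphM !rmorphXn -ep -e1 -e2 !exprD.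
  set A := phi f ^+ p; set B := phi f ^+ n1; set C := phi f ^+ n2.
  rewrite mulrDl; congr (_ + _).
    by rewrite [a * A * _]mulrACA mulrA.
  by rewrite -[RHS]mulrA [C * _]mulrC.
move=> a b /Q'P [r [n [qr e]]] na.
have [x [p ex]] := hs a; have [y [q ey]] := hs b.
have e' : phi (x * y) * phi f ^+ n = phi (r * f ^+ (p + q)).
  rewrite !rmorphM rmorphXn -ex -ey -e exprD.
  set A := phi f ^+ p; set B := phi f ^+ q; set C := phi f ^+ n.
  by rewrite mulrACA -!mulrA; congr (_ * (_ * _)); rewrite mulrA mulrC.
have [k hk'] := loc_ker e'.
have nx : ~~ Q x.
  by apply/negP => qx; move/negP: na; apply; apply/Q'P; exists x, p.
have hxy : Q (x * (y * f ^+ (n + k))).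
  rewrite mulrA mulrC addnC hk'; apply: idl_mul => //; exact: idl_mulr.
have [N hN] := hp _ _ hxy nx.
exists N; apply/Q'P; exists (y ^+ N * f ^+ ((n + k) * N)), (q * N + (n + k) * N)%N.
split; first by rewrite exprM -exprMn.
by rewrite rmorphM !rmorphXn exprD mulrA exprM -exprMn ey.
Qed.

End Loc.

Lemma precomp_continuous (I J : eqType) (h : J -> I) :
  continuous (fun f : {ptws I -> bool} => ((fun j => f (h j)) : {ptws J -> bool})).
Proof.
move=> f; apply/cvg_sup => j.
have := @continuous_comp_initial _ _ _ (fun g : {ptws J -> bool} => g j)
  (fun f : {ptws I -> bool} => ((fun j => f (h j)) : {ptws J -> bool})).
move=> /(_ (@proj_continuous I (fun=> bool) (h j))).
by apply.
Qed.

Lemma ev_closed (R : eqType) r (P : set bool) : closed [set I : {ptws R -> bool} | P (I r)].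
Proof.
have hc : continuous (fun I : {ptws R -> bool} => I r).
  by move=> I; apply: (@proj_continuous R (fun=> bool) r).
exact: (proj1 (continuous_closedP _) hc P (discrete_closed P)).
Qed.

Lemma compactT (R : eqType) : compact [set: {ptws R -> bool}].
Proof.
have := @tychonoff R (fun=> bool) (fun=> setT) (fun=> bool_compact).
congr compact; by apply/seteqP; split.
Qed.

Lemma hausdorffT (R : eqType) : hausdorff_space {ptws R -> bool}.
Proof. by apply: hausdorff_product => _; exact: discrete_hausdorff. Qed.

Lemma closure_image_sub (T U : topologicalType) (h : T -> U) (A : set T) (B : set U) :
  continuous h -> h @` A `<=` B -> h @` closure A `<=` closure B.
Proof.
move=> hc hAB _ [x clx <-] N hN.
have [y [Ay Ny]] := clx _ (hc x _ hN).
by exists (h y); split => //; apply: hAB; exists y.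
Qed.

Lemma Id_closed (R : comNzRingType) : closed (Id_set R).
Proof.
have -> : Id_set R = [set I : {ptws R -> bool} | I 0] `&` [set I | ~~ I 1] `&`
   \bigcap_(t in [set: R * R * R])
     ([set I : {ptws R -> bool} | ~~ I t.1.2] `|` [set I | ~~ I t.2] `|` [set I | I (t.1.1 * t.1.2 + t.2)]).
  apply/seteqP; split => I.
    rewrite /Id_set /= idlE => -[h0 h1 h2]; split; first by split.
    move=> [[a u] v] _ /=; case: (boolP (I u)) => hu; last by left; left.
    case: (boolP (I v)) => hv; last by left; right.
    by right; apply: h2.
  move=> [[h0 h1] h2]; rewrite /Id_set /= idlE; split => // a u v hu hv.
  by have := h2 (a, u, v) Logic.I; rewrite /= hu hv => -[[]|].
apply: closedI; first apply: closedI.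
- exact: (@ev_closed R 0 (fun b : bool => is_true b)).
- exact: (@ev_closed R 1 (fun b : bool => is_true (~~ b))).
apply: closed_bigI => t _; apply: closedU; first apply: closedU.
- exact: (@ev_closed R t.1.2 (fun b : bool => is_true (~~ b))).
- exact: (@ev_closed R t.2 (fun b : bool => is_true (~~ b))).
- exact: (@ev_closed R (t.1.1 * t.1.2 + t.2) (fun b : bool => is_true b)).
Qed.

Lemma prim_compact (R : comNzRingType) : compact (prim R).
Proof.
apply: (@subclosed_compact _ _ [set: {ptws R -> bool}]) => //.
  apply: closedI; [exact: closed_closure|exact: Id_closed].
exact: compactT.
Qed.

Lemma primary_prim (S : comNzRingType) (Q : {ptws S -> bool}) : prm Q -> prim S Q.
Proof.
move=> hQ; split; first by apply: subset_closure; rewrite /primary_set /= prmE.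
by rewrite /Id_set /= idlE; case: hQ.
Qed.

Lemma part1 (R : comNzRingType) (f : R) (S : comNzRingType) (phi : {rmorphism R -> S}) :
  is_localization f phi ->
     [/\ res phi @` prim S `<=` prim R,
         {within prim S, continuous (res phi)},
         (exists g : {ptws R -> bool} -> {ptws S -> bool},
            (forall I, prim S I -> g (res phi I) = I) /\
            {within res phi @` prim S, continuous g})
       & compact (res phi @` prim S)].
Proof.
move=> hloc.
have hres : continuous (res phi) by exact: (@precomp_continuous S R phi).
split.
- move=> _ [I [clI idI] <-]; split.
    apply: (closure_image_sub (A := primary_set S) hres); last by exists I.
    move=> _ [Q hQ <-]; rewrite /primary_set /= prmE; apply: res_prm.
    by rewrite -prmE.
  by rewrite /Id_set /= idlE; apply: res_idl; rewrite -idlE.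
- exact: continuous_subspaceT.
- case: hloc => [[u hu] hs hk].
  pose rep s := projT1 (cid (hs s)).
  have hrep s : exists n, s * phi f ^+ n = phi (rep s) := projT2 (cid (hs s)).
  exists (fun J : {ptws R -> bool} => ((fun s => J (rep s)) : {ptws S -> bool})).
  split.
    move=> I [_ /idlE hI]; apply: funext => s /=.
    rewrite /res; have [n e] := hrep s; rewrite -e.
    apply/idP/idP => h; last exact: idl_mulr.
    have : I (u ^+ n * (s * phi f ^+ n)) by apply: idl_mul.
    by rewrite mulrCA -exprMn [u * _]mulrC hu expr1n mulr1.
  apply: continuous_subspaceT; exact: (@precomp_continuous R S rep).
- apply: continuous_compact; last exact: prim_compact.
  exact: continuous_subspaceT.
Qed.

Unset Implicit Arguments.

Theorem proposition5p10 (R : comNzRingType) :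
  (forall (f : R) (S : comNzRingType) (phi : {rmorphism R -> S}),
     ~ nilpotent_elt f -> is_localization f phi ->
     [/\ res phi @` prim S `<=` prim R,
         {within prim S, continuous (res phi)},
         (exists g : {ptws R -> bool} -> {ptws S -> bool},
            (forall I, prim S I -> g (res phi I) = I) /\
            {within res phi @` prim S, continuous g})
       & compact (res phi @` prim S)]) /\
  (forall (m : nat) (fs : 'I_m -> R) (S : 'I_m -> comNzRingType)
          (phi : forall i : 'I_m, {rmorphism R -> S i}),
     (forall i, ~ nilpotent_elt (fs i)) ->
     (forall i, is_localization (fs i) (phi i)) ->
     (exists a : 'I_m -> R, \sum_(i < m) a i * fs i = 1) ->
     (forall i, compact (res (phi i) @` prim (S i))) /\
     prim R = \bigcup_(i in [set: 'I_m]) (res (phi i) @` prim (S i))).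
Proof.
split; first by move=> f S phi _; apply: part1.
move=> m fs S phi _ hloc [a ha].
have P1 i := part1 (hloc i).
have hc i : compact (res (phi i) @` prim (S i)) by case: (P1 i).
split => //.
apply/seteqP; split; last first.
  by move=> J [i _ [I hI <-]]; case: (P1 i) => + _ _ _; apply; exists I.
move=> J [clJ idJ].
set U := \bigcup_(i in [set: 'I_m]) (res (phi i) @` prim (S i)).
have hU : closed U.
  apply: closed_bigcup; first exact: finite_finset.
  by move=> i _; apply: compact_closed; [exact: hausdorffT | exact: hc].
have hsub : primary_set R `<=` U.
  move=> Q /prmE hQ.
  have [i hi] := rad_sum (proj1 hQ) ha.
  exists i => //.
  exists (Q' (fs i) (phi i) (Q : R -> bool) : {ptws S i -> bool}).
    by apply: primary_prim; apply: Q'prm.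
  by apply: funext => r; rewrite /res Q'res.
by rewrite (proj1 (closure_id U) hU); exact: (closure_subset hsub).
Qed.
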